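(* In the two-type setting, define $\bar h:\mathbb R\times[0,1]\to\mathbb R\times[0,1]$ by $\bar h(p)=\big(\phi_1p_1\psi(\beta_2p_2),\,h_2(0,p_2)\big)$. Then for every fixed $k\in\mathbb N$, $$\lim_{p_1\to0^+}\frac{\bar h^k_1(p)}{h^k_1(p)}=1\qquad\text{uniformly in }p_2\in[0,1],$$ where $\bar h^k_1$ and $h^k_1$ denote the first coordinates of the $k$-th iterates of $\bar h$ and $h$.
   Context: Two-type limiting map: $\beta_1,\beta_2>0$, $\alpha(1),\alpha(2)\in[0,1)$, $\phi_i=(1-\alpha(i))\beta_i$. For $p\in[0,1]^2$, $S(p)=\beta_1p_1+\beta_2p_2$ and $f^{(i)}(p)=(1-e^{-S(p)})\beta_ip_i/S(p)$ ($=0$ if $S(p)=0$). For $\alpha\in(0,1)$ let $g_\alpha(x)=\frac{(1-\sqrt{1-4(1-\alpha)x(1-x)})^3}{8(1-\alpha)^2x^2}$ for $x\in(0,1]$ and $g_\alpha(0)=0$; let $g_0(x)=x$ for $x\le1/2$ and $g_0(x)=(1-x)^3/x^2$ for $x>1/2$. $h(p)=(h_1(p),h_2(p))$ with $h_i(p)=g_{\alpha(i)}(f^{(i)}(p))$. $\psi(x)=(1-e^{-x})/x$, $\psi(0)=1$. *)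

(* Defs.v *)
From Stdlib Require Import Reals.
Open Scope R_scope.

(* Two-type limiting map. Parameters: b1 b2 = beta_1 beta_2, a1 a2 = alpha(1) alpha(2). *)

Definition phi (a b : R) : R := (1 - a) * b.

Definition S2 (b1 b2 : R) (p : R * R) : R := b1 * fst p + b2 * snd p.

Definition f_i (b1 b2 bi pi : R) (p : R * R) : R :=
  let s := S2 b1 b2 p in
  if Req_EM_T s 0 then 0 else (1 - exp (- s)) * bi * pi / s.

Definition f1 (b1 b2 : R) (p : R * R) : R := f_i b1 b2 b1 (fst p) p.
Definition f2 (b1 b2 : R) (p : R * R) : R := f_i b1 b2 b2 (snd p) p.

(* g_alpha; the case alpha = 0 is the separately given g_0 *)
Definition g (a x : R) : R :=
  if Req_EM_T a 0 then
    (if Rle_dec x (1/2) then x else (1 - x) ^ 3 / x ^ 2)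
  else
    (if Req_EM_T x 0 then 0
     else (1 - sqrt (1 - 4 * (1 - a) * x * (1 - x))) ^ 3
          / (8 * (1 - a) ^ 2 * x ^ 2)).

Definition h (b1 b2 a1 a2 : R) (p : R * R) : R * R :=
  (g a1 (f1 b1 b2 p), g a2 (f2 b1 b2 p)).

Definition psi (x : R) : R :=
  if Req_EM_T x 0 then 1 else (1 - exp (- x)) / x.

Definition hbar (b1 b2 a1 a2 : R) (p : R * R) : R * R :=
  (phi a1 b1 * fst p * psi (b2 * snd p), snd (h b1 b2 a1 a2 (0, snd p))).

(* Main.v *)
Require Import Defs.
From Stdlib Require Import Reals Lra Psatz.
Open Scope R_scope.

Lemma psi_nz x : x <> 0 -> psi x = (1 - exp (- x)) / x.
Proof. intro H; unfold psi; destruct (Req_EM_T x 0); [contradiction|reflexivity]. Qed.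

Lemma exp_neg_le1 s : 0 <= s -> exp (- s) <= 1.
Proof. intro H. rewrite <- exp_0. destruct (Req_dec s 0) as [->|Hs].
  rewrite Ropp_0; lra. left; apply exp_increasing; lra. Qed.

Lemma psi_bounds s K : 0 <= s <= K -> exp (- K) <= psi s <= 1.
Proof.
  intros [H0 HK]. destruct (Req_dec s 0) as [->|Hs].
  - unfold psi. destruct (Req_EM_T 0 0); [|contradiction]. split; [|lra].
    apply exp_neg_le1; lra.
  - rewrite psi_nz by exact Hs. assert (Hs' : 0 < s) by lra.
    pose proof (exp_ineq1_le (- s)). pose proof (exp_ineq1_le s).
    pose proof (exp_pos s). pose proof (exp_pos (-s)).
    assert (E : exp s * exp (- s) = 1) by (rewrite <- exp_plus; replace (s + - s) with 0 by ring; apply exp_0).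
    assert (exp (- K) <= exp (- s)).
    { destruct (Req_dec s K) as [->|]. lra. left; apply exp_increasing; lra. }
    split.
    + apply Rmult_le_reg_r with s; auto. unfold Rdiv; rewrite Rmult_assoc, Rinv_l by lra. nra.
    + apply Rmult_le_reg_r with s; auto. unfold Rdiv; rewrite Rmult_assoc, Rinv_l by lra. nra.
Qed.

Lemma psi_cont x : continuity_pt psi x.
Proof.
  destruct (Req_dec x 0) as [->|Hx].
  - intros eps Heps. destruct (derivable_pt_lim_exp 0 eps Heps) as [d Hd].
    exists d. split. apply cond_pos. intros y [[_ Hy0] Hy]. simpl in Hy. unfold R_dist in Hy.
    simpl. unfold R_dist. rewrite psi_nz by auto. unfold psi.
    destruct (Req_EM_T 0 0); [|contradiction].
    assert (Hy' : -y <> 0) by lra.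
    assert (Hd' := Hd (-y) Hy'). rewrite Rabs_Ropp in Hd'. rewrite Rminus_0_r in Hy.
    specialize (Hd' Hy). rewrite exp_0, Rplus_0_l in Hd'.
    replace ((1 - exp (- y)) / y - 1) with ((exp (- y) - 1) / - y - 1). exact Hd'.
    field. lra.
  - apply continuity_pt_locally_ext with (f := fun s => (1 - exp (- s)) / s) (a := Rabs x).
    + apply Rabs_pos_lt; auto.
    + intros y Hy. unfold Rdist in Hy. rewrite psi_nz; auto. intro E; subst.
      rewrite Rminus_0_l, Rabs_Ropp in Hy. lra.
    + reg.
Qed.

Definition mx (x : R) := (x + 1/2 + Rabs (x - 1/2)) / 2.
Definition qx (x : R) := (1 - x) ^ 3 / (mx x) ^ 2.
Definition G0 (x : R) := (x + qx x - Rabs (x - qx x)) / 2.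
Definition Ra (a x : R) := 8 * (1 - x) ^ 3 / (1 + sqrt (1 - 4 * (1 - a) * x * (1 - x))) ^ 3.
Definition gc (a x : R) := if Req_EM_T a 0 then G0 x else (1 - a) * x * Ra a x.

Lemma mx_ge x : 1/2 <= mx x.
Proof. unfold mx. destruct (Rle_dec x (1/2)).
  rewrite Rabs_left1 by lra. lra. rewrite Rabs_right by lra. lra. Qed.

Lemma sqrt_arg_pos a x : 0 < a < 1 -> 0 < 1 - 4 * (1 - a) * x * (1 - x).
Proof. intros. pose proof (pow2_ge_0 (x - 1/2)).
  assert (x * (1 - x) <= 1/4) by (simpl in H0; nra).
  assert (0 <= (1 - a) * (1/4 - x * (1 - x))) by (apply Rmult_le_pos; lra). nra. Qed.

Lemma gc_cont a x : 0 <= a < 1 -> continuity_pt (gc a) x.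
Proof.
  intros Ha. unfold gc. destruct (Req_EM_T a 0) as [E|E].
  - assert (Hm : continuity_pt mx x) by (unfold mx; reg).
    assert (Hq : continuity_pt qx x).
    { change qx with (fun s => (1 - s) ^ 3 / (mx s) ^ 2).
      apply (continuity_pt_div (fun s => (1 - s) ^ 3) (fun s => (mx s) ^ 2)).
      reg. apply (continuity_pt_comp mx (fun y => y ^ 2)); [exact Hm|reg].
      pose proof (mx_ge x). apply pow_nonzero. lra. }
    assert (Hab : continuity_pt (fun s => Rabs (s - qx s)) x).
    { apply (continuity_pt_comp (fun s => s - qx s) Rabs).
      apply (continuity_pt_minus id qx). apply derivable_continuous_pt, derivable_pt_id. exact Hq.
      apply Rcontinuity_abs. }
    unfold G0.
    apply (continuity_pt_mult (fun s => s + qx s - Rabs (s - qx s)) (fun _ => /2)).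
    apply (continuity_pt_minus (fun s => s + qx s)).
    apply (continuity_pt_plus id qx). apply derivable_continuous_pt, derivable_pt_id. exact Hq.
    exact Hab. reg.
  - unfold Ra. assert (0 < a) by (destruct Ha as [[]]; auto; lra).
    pose proof (sqrt_arg_pos a x (conj H (proj2 Ha))).
    reg. lra. pose proof (sqrt_pos (1 - 4 * (1 - a) * x * (1 - x))).
    assert (0 < 1 + sqrt (1 - 4 * (1 - a) * x * (1 - x))) by lra.
    apply pow_nonzero; lra.
Qed.

Lemma g_eq_gc a x : 0 <= a < 1 -> 0 <= x <= 1 -> g a x = gc a x.
Proof.
  intros Ha Hx. unfold g, gc. destruct (Req_EM_T a 0) as [E|E].
  - unfold G0, qx, mx. destruct (Rle_dec x (1/2)).
    + rewrite (Rabs_left1 (x - 1/2)) by lra.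
      replace ((x + 1 / 2 + - (x - 1 / 2)) / 2) with (1/2) by field.
      assert (x <= (1 - x) ^ 3 / (1 / 2) ^ 2).
      { replace ((1 - x) ^ 3 / (1 / 2) ^ 2) with (4 * (1-x)^3) by field. nra. }
      rewrite Rabs_left1 by lra. field.
    + rewrite (Rabs_right (x - 1/2)) by lra.
      replace ((x + 1 / 2 + (x - 1 / 2)) / 2) with x by field.
      assert ((1 - x) ^ 3 / x ^ 2 <= x).
      { apply Rmult_le_reg_r with (x^2). nra. unfold Rdiv. rewrite Rmult_assoc, Rinv_l by nra.
        rewrite Rmult_1_r. nra. }
      rewrite Rabs_right by lra. field. lra.
  - assert (0 < a) by (destruct Ha as [[]]; auto; lra).
    unfold Ra. set (z := 1 - 4 * (1 - a) * x * (1 - x)).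
    assert (Hz : 0 < z) by (apply sqrt_arg_pos; lra).
    pose proof (sqrt_sqrt z (Rlt_le _ _ Hz)) as Hss. set (s := sqrt z) in *.
    assert (Hs0 : 0 <= s) by apply sqrt_pos.
    destruct (Req_EM_T x 0) as [->|Hx0].
    + field. lra.
    + assert (Hs : (1 - s) ^ 3 * (1 + s) ^ 3 = 8 * (1 - a) * x * (1 - x) ^ 3 * (8 * (1 - a) ^ 2 * x ^ 2)).
      { replace ((1 - s) ^ 3 * (1 + s) ^ 3) with ((1 - s * s) ^ 3) by ring.
        rewrite Hss. unfold z. ring. }
      assert (0 < 1 + s) by lra.
      transitivity ((1 - s) ^ 3 * (1 + s) ^ 3 / (8 * (1 - a) ^ 2 * x ^ 2 * (1 + s) ^ 3)).
      field. repeat split; lra.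
      rewrite Hs. field. repeat split; lra.
Qed.

Lemma Ra_bounds a x : 0 < a < 1 -> 0 <= x <= 1 -> 0 <= Ra a x <= 8.
Proof.
  intros Ha Hx. unfold Ra. pose proof (sqrt_pos (1 - 4 * (1 - a) * x * (1 - x))).
  set (s := sqrt _) in *. assert (1 <= (1 + s) ^ 3).
  { replace 1 with (1 ^ 3) at 1 by ring. apply pow_incr. lra. }
  assert (0 <= (1 - x) ^ 3 <= 1).
  { split. apply pow_le; lra. replace 1 with (1 ^ 3) by ring. apply pow_incr. lra. }
  split. apply Rmult_le_pos. lra. left; apply Rinv_0_lt_compat; lra.
  apply Rmult_le_reg_r with ((1 + s) ^ 3). lra.
  unfold Rdiv. rewrite Rmult_assoc, Rinv_l by lra. nra.
Qed.

Lemma g_bounds a x : 0 <= a < 1 -> 0 <= x <= 1 -> 0 <= g a x <= 8.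
Proof.
  intros Ha Hx. destruct (Req_dec a 0) as [E|E].
  - subst. unfold g. destruct (Req_EM_T 0 0); [|contradiction].
    destruct (Rle_dec x (1/2)). lra.
    assert (0 <= (1 - x) ^ 3 <= 1).
    { split. apply pow_le; lra. replace 1 with (1 ^ 3) by ring. apply pow_incr. lra. }
    assert (1/4 <= x ^ 2) by nra.
    split. apply Rmult_le_pos. lra. left; apply Rinv_0_lt_compat; lra.
    apply Rmult_le_reg_r with (x ^ 2). lra.
    unfold Rdiv. rewrite Rmult_assoc, Rinv_l by lra. nra.
  - rewrite g_eq_gc by auto. unfold gc. destruct (Req_EM_T a 0); [contradiction|].
    assert (0 < a) by lra. pose proof (Ra_bounds a x (conj H (proj2 Ha)) Hx).
    assert (0 <= (1 - a) * x <= 1) by nra. nra.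
Qed.

Lemma g_small a : 0 <= a < 1 -> forall eps, 0 < eps -> exists d, 0 < d /\
  forall t, 0 <= t < d -> Rabs (g a t - (1 - a) * t) <= eps * t.
Proof.
  intros Ha eps Heps. destruct (Req_dec a 0) as [E|E].
  - subst. exists (1/2). split. lra. intros t Ht. unfold g.
    destruct (Req_EM_T 0 0); [|contradiction]. destruct (Rle_dec t (1/2)); [|lra].
    replace (t - (1 - 0) * t) with 0 by ring. rewrite Rabs_R0. nra.
  - assert (Hc : continuity_pt (Ra a) 0).
    { change (continuity_pt (fun x => 8 * (1 - x) ^ 3 / (1 + sqrt (1 - 4 * (1 - a) * x * (1 - x))) ^ 3) 0).
      reg. all: rewrite ?Rmult_0_r, ?Rmult_0_l, ?Rminus_0_r, ?sqrt_1; try lra.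
      }
    destruct (Hc eps Heps) as [d [Hd H]].
    exists (Rmin d 1). split. apply Rmin_pos; lra. intros t Ht.
    assert (Ht1 : t < d /\ t < 1) by (split; eapply Rlt_le_trans; try apply Ht; [apply Rmin_l|apply Rmin_r]).
    rewrite g_eq_gc by lra. unfold gc. destruct (Req_EM_T a 0); [contradiction|].
    assert (Ra a 0 = 1).
    { unfold Ra. rewrite Rmult_0_r, Rmult_0_l, Rminus_0_r, sqrt_1. field. }
    destruct (Req_dec t 0) as [->|Ht0].
    + rewrite !Rmult_0_r, Rmult_0_l, Rminus_0_r, Rabs_R0. lra.
    + assert (Hr : Rabs (Ra a t - 1) < eps).
      { rewrite <- H0. apply (H t). split. split. exact I. auto.
        simpl. unfold R_dist. rewrite Rminus_0_r, Rabs_right by lra. lra. }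
      replace ((1 - a) * t * Ra a t - (1 - a) * t) with (((1 - a) * t) * (Ra a t - 1)) by ring.
      rewrite Rabs_mult, Rabs_right by nra.
      assert (0 <= (1 - a) * t <= t) by nra.
      pose proof (Rabs_pos (Ra a t - 1)). nra.
Qed.

Lemma unif_ext f f' X : uniform_continuity f X -> (forall x, X x -> f x = f' x) ->
  uniform_continuity f' X.
Proof. intros H E eps. destruct (H eps) as [d Hd]. exists d. intros x y Hx Hy Hxy.
  rewrite <- !E by auto. auto. Qed.

Lemma g_unif a : 0 <= a < 1 -> uniform_continuity (g a) (fun x => 0 <= x <= 1).
Proof.
  intro Ha. apply unif_ext with (gc a).
  apply Heine. apply compact_P3. intros; apply gc_cont; auto.
  intros; symmetry; apply g_eq_gc; auto.
Qed.

Lemma fi_form b1 b2 bi pi x y : 0 < b1 -> 0 < b2 -> 0 <= x -> 0 <= y ->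
  (pi = 0 \/ 0 < b1 * x + b2 * y) ->
  f_i b1 b2 bi pi (x, y) = psi (b1 * x + b2 * y) * bi * pi.
Proof.
  intros. unfold f_i, S2; simpl. destruct (Req_EM_T (b1 * x + b2 * y) 0) as [E|E].
  - destruct H3 as [->|]; [ring|lra].
  - unfold psi. destruct (Req_EM_T (b1 * x + b2 * y) 0); [contradiction|]. field. auto.
Qed.

Lemma f1_form b1 b2 x y : 0 < b1 -> 0 < b2 -> 0 <= x -> 0 <= y ->
  f1 b1 b2 (x, y) = psi (b1 * x + b2 * y) * b1 * x.
Proof. intros. unfold f1. simpl. apply fi_form; auto.
  destruct (Req_dec x 0); [left; auto|right; nra]. Qed.

Lemma f2_form b1 b2 x y : 0 < b1 -> 0 < b2 -> 0 <= x -> 0 <= y ->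
  f2 b1 b2 (x, y) = psi (b1 * x + b2 * y) * b2 * y.
Proof. intros. unfold f2. simpl. apply fi_form; auto.
  destruct (Req_dec y 0); [left; auto|right; nra]. Qed.

Lemma fi_bounds b1 b2 bi pi x y : 0 < b1 -> 0 < b2 -> 0 <= x -> 0 <= y ->
  0 <= bi * pi <= b1 * x + b2 * y -> 0 <= f_i b1 b2 bi pi (x, y) <= 1.
Proof.
  intros. unfold f_i, S2; simpl. destruct (Req_EM_T (b1 * x + b2 * y) 0) as [E|E]. lra.
  set (S := b1 * x + b2 * y) in *.
  assert (0 < S) by (unfold S in *; nra).
  pose proof (exp_pos (- S)).
  assert (exp (- S) <= 1).
  { rewrite <- exp_0. left. apply exp_increasing. lra. }
  assert (0 <= bi * pi / S <= 1).
  { split. apply Rmult_le_pos; [lra|left; apply Rinv_0_lt_compat; lra].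
    apply Rmult_le_reg_r with S; auto. unfold Rdiv; rewrite Rmult_assoc, Rinv_l by lra. lra. }
  replace ((1 - exp (- S)) * bi * pi / S) with ((1 - exp (- S)) * (bi * pi / S)) by (field; lra).
  nra.
Qed.

Lemma f1_bounds b1 b2 x y : 0 < b1 -> 0 < b2 -> 0 <= x -> 0 <= y -> 0 <= f1 b1 b2 (x, y) <= 1.
Proof. intros. unfold f1; simpl. apply fi_bounds; auto. nra. Qed.
Lemma f2_bounds b1 b2 x y : 0 < b1 -> 0 < b2 -> 0 <= x -> 0 <= y -> 0 <= f2 b1 b2 (x, y) <= 1.
Proof. intros. unfold f2; simpl. apply fi_bounds; auto. nra. Qed.

Definition EV (P : R -> R -> Prop) := exists d, 0 < d /\
  forall p1 p2, 0 < p1 < d -> 0 <= p2 <= 1 -> P p1 p2.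
Definition UL (F : R -> R -> R) (L : R -> R) := forall eps, 0 < eps ->
  EV (fun p1 p2 => Rabs (F p1 p2 - L p2) < eps).
Definition BD (L : R -> R) := exists M, forall p2, 0 <= p2 <= 1 -> Rabs (L p2) <= M.

Lemma EV_and P Q : EV P -> EV Q -> EV (fun p1 p2 => P p1 p2 /\ Q p1 p2).
Proof.
  intros [d1 [H1 E1]] [d2 [H2 E2]]. exists (Rmin d1 d2). split. apply Rmin_pos; auto.
  intros p1 p2 Hp Hq. pose proof (Rmin_l d1 d2). pose proof (Rmin_r d1 d2).
  split; [apply E1|apply E2]; auto; lra.
Qed.

Lemma EV_mono (P Q : R -> R -> Prop) : EV P ->
  (forall p1 p2, 0 < p1 -> 0 <= p2 <= 1 -> P p1 p2 -> Q p1 p2) -> EV Q.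
Proof. intros [d [Hd E]] H. exists d. split; auto. intros. apply H; auto; try lra. Qed.

Lemma EV_p1 d : 0 < d -> EV (fun p1 _ => p1 < d).
Proof. intros. exists d. split; auto. intros; lra. Qed.

Lemma EV_all (P : R -> R -> Prop) : (forall p1 p2, 0 < p1 -> 0 <= p2 <= 1 -> P p1 p2) -> EV P.
Proof. intros. exists 1. split. lra. intros; apply H; lra. Qed.

Lemma UL_ext F G L L' : UL F L -> EV (fun p1 p2 => F p1 p2 = G p1 p2) ->
  (forall p2, 0 <= p2 <= 1 -> L p2 = L' p2) -> UL G L'.
Proof.
  intros H E E' eps Heps. eapply EV_mono. apply EV_and. apply (H eps Heps). exact E.
  simpl. intros p1 p2 _ Hp [A B]. rewrite <- B, <- E'; auto.
Qed.

Lemma UL_const L : UL (fun _ p2 => L p2) L.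
Proof. intros eps Heps. apply EV_all. intros. rewrite Rminus_diag, Rabs_R0. auto. Qed.

Lemma UL_p1 : UL (fun p1 _ => p1) (fun _ => 0).
Proof. intros eps Heps. exists eps. split; auto. intros. rewrite Rminus_0_r, Rabs_right; lra. Qed.

Lemma UL_plus F G L K : UL F L -> UL G K -> UL (fun p1 p2 => F p1 p2 + G p1 p2) (fun p2 => L p2 + K p2).
Proof.
  intros H1 H2 eps Heps. eapply EV_mono. apply EV_and; [apply (H1 (eps/2))|apply (H2 (eps/2))]; lra.
  simpl. intros p1 p2 _ _ [A B].
  replace (F p1 p2 + G p1 p2 - (L p2 + K p2)) with ((F p1 p2 - L p2) + (G p1 p2 - K p2)) by ring.
  eapply Rle_lt_trans. apply Rabs_triang. lra.
Qed.

Lemma BD_const c : BD (fun _ => c).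
Proof. exists (Rabs c). intros; lra. Qed.

Lemma UL_bnd F L : UL F L -> BD L -> exists M, 0 <= M /\ EV (fun p1 p2 => Rabs (F p1 p2) <= M).
Proof.
  intros H [M HM]. exists (Rabs M + 1). split. pose proof (Rabs_pos M); lra.
  eapply EV_mono. apply (H 1). lra. simpl. intros p1 p2 _ Hp A.
  specialize (HM p2 Hp). pose proof (Rle_abs M).
  replace (F p1 p2) with ((F p1 p2 - L p2) + L p2) by ring.
  eapply Rle_trans. apply Rabs_triang. lra.
Qed.

Lemma UL_mult F G L K : UL F L -> UL G K -> BD L -> BD K ->
  UL (fun p1 p2 => F p1 p2 * G p1 p2) (fun p2 => L p2 * K p2).
Proof.
  intros H1 H2 [ML HL] HK eps Heps.
  destruct (UL_bnd G K H2 HK) as [MG [HMG EG]].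
  assert (HML : 0 <= Rabs ML) by apply Rabs_pos.
  set (e1 := eps / (2 * (MG + 1))). set (e2 := eps / (2 * (Rabs ML + 1))).
  assert (He1 : 0 < e1) by (unfold e1; apply Rdiv_lt_0_compat; lra).
  assert (He2 : 0 < e2) by (unfold e2; apply Rdiv_lt_0_compat; lra).
  assert (E1 : e1 * (MG + 1) = eps / 2) by (unfold e1; field; lra).
  assert (E2 : e2 * (Rabs ML + 1) = eps / 2) by (unfold e2; field; lra).
  eapply EV_mono. apply EV_and. apply EV_and. apply (H1 e1 He1). apply (H2 e2 He2). exact EG.
  simpl. intros p1 p2 _ Hp [[A B] C].
  specialize (HL p2 Hp). pose proof (Rle_abs ML).
  replace (F p1 p2 * G p1 p2 - L p2 * K p2) with
    ((F p1 p2 - L p2) * G p1 p2 + L p2 * (G p1 p2 - K p2)) by ring.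
  eapply Rle_lt_trans. apply Rabs_triang. rewrite !Rabs_mult.
  pose proof (Rabs_pos (F p1 p2 - L p2)). pose proof (Rabs_pos (G p1 p2 - K p2)).
  pose proof (Rabs_pos (L p2)). pose proof (Rabs_pos (G p1 p2)).
  assert (Rabs (F p1 p2 - L p2) * Rabs (G p1 p2) <= e1 * (MG + 1)) by nra.
  assert (Rabs (L p2) * Rabs (G p1 p2 - K p2) <= (Rabs ML + 1) * e2 * 1) by nra.
  assert (Rabs (L p2) * Rabs (G p1 p2 - K p2) < eps / 2 \/ Rabs (G p1 p2 - K p2) = 0) by
    (destruct (Req_dec (Rabs (G p1 p2 - K p2)) 0); [right; auto|left; nra]).
  destruct H8 as [H8|H8]. lra. rewrite H8, Rmult_0_r. lra.
Qed.

Lemma UL_comp f X F L : uniform_continuity f X -> EV (fun p1 p2 => X (F p1 p2)) ->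
  (forall p2, 0 <= p2 <= 1 -> X (L p2)) -> UL F L ->
  UL (fun p1 p2 => f (F p1 p2)) (fun p2 => f (L p2)).
Proof.
  intros Hu HX HL H eps Heps. destruct (Hu (mkposreal eps Heps)) as [d Hd].
  eapply EV_mono. apply EV_and. apply HX. apply (H d (cond_pos d)).
  simpl. intros p1 p2 _ Hp [A B]. apply (Hd _ _ A (HL p2 Hp) B).
Qed.

Lemma UL_approx F G L : UL F L -> (forall eps, 0 < eps -> EV (fun p1 p2 => Rabs (G p1 p2 - F p1 p2) <= eps)) ->
  UL G L.
Proof.
  intros H HG eps Heps. eapply EV_mono. apply EV_and. apply (H (eps/2)). lra. apply (HG (eps/2)). lra.
  simpl. intros p1 p2 _ _ [A B].
  replace (G p1 p2 - L p2) with ((G p1 p2 - F p1 p2) + (F p1 p2 - L p2)) by ring.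
  eapply Rle_lt_trans. apply Rabs_triang. lra.
Qed.

Lemma UL_inv F L m : UL F L -> 0 < m -> (forall p2, 0 <= p2 <= 1 -> m <= L p2) ->
  UL (fun p1 p2 => L p2 / F p1 p2) (fun _ => 1).
Proof.
  intros H Hm HL eps Heps.
  set (e := Rmin (m / 2) (eps * m / 2)).
  assert (He : 0 < e) by (apply Rmin_pos; [lra|]; apply Rdiv_lt_0_compat; nra).
  eapply EV_mono. apply (H e He). intros p1 p2 _ Hp A.
  specialize (HL p2 Hp). pose proof (Rmin_l (m / 2) (eps * m / 2)). pose proof (Rmin_r (m / 2) (eps * m / 2)).
  fold e in H0, H1. apply Rabs_def2 in A. destruct A as [A1 A2].
  assert (HF : m / 2 < F p1 p2) by lra.
  replace (L p2 / F p1 p2 - 1) with ((L p2 - F p1 p2) / F p1 p2) by (field; lra).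
  unfold Rdiv. rewrite Rabs_mult, Rabs_inv. rewrite (Rabs_right (F p1 p2)) by lra. fold (Rabs (L p2 - F p1 p2) / F p1 p2).
  apply Rmult_lt_reg_r with (F p1 p2). lra.
  unfold Rdiv. rewrite Rmult_assoc, Rinv_l, Rmult_1_r by lra.
  assert (Rabs (L p2 - F p1 p2) < e) by (apply Rabs_def1; lra). nra.
Qed.

Definition IX b1 b2 a1 a2 n p1 p2 := fst (Nat.iter n (h b1 b2 a1 a2) (p1, p2)).
Definition IY b1 b2 a1 a2 n p1 p2 := snd (Nat.iter n (h b1 b2 a1 a2) (p1, p2)).

Lemma IX_S b1 b2 a1 a2 n p1 p2 : IX b1 b2 a1 a2 (S n) p1 p2 =
  g a1 (f1 b1 b2 (IX b1 b2 a1 a2 n p1 p2, IY b1 b2 a1 a2 n p1 p2)).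
Proof. unfold IX, IY. simpl. destruct (Nat.iter n (h b1 b2 a1 a2) (p1, p2)). reflexivity. Qed.
Lemma IY_S b1 b2 a1 a2 n p1 p2 : IY b1 b2 a1 a2 (S n) p1 p2 =
  g a2 (f2 b1 b2 (IX b1 b2 a1 a2 n p1 p2, IY b1 b2 a1 a2 n p1 p2)).
Proof. unfold IX, IY. simpl. destruct (Nat.iter n (h b1 b2 a1 a2) (p1, p2)). reflexivity. Qed.

Definition Hv b1 b2 a2 v := g a2 (f2 b1 b2 (0, v)).
Definition vseq b1 b2 a2 n p2 := Nat.iter n (Hv b1 b2 a2) p2.
Fixpoint Pn b1 b2 a1 a2 n p2 := match n with
  | O => 1
  | S m => phi a1 b1 * Pn b1 b2 a1 a2 m p2 * psi (b2 * vseq b1 b2 a2 m p2) end.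

Lemma hbar_iter b1 b2 a1 a2 n p1 p2 :
  Nat.iter n (hbar b1 b2 a1 a2) (p1, p2) = (p1 * Pn b1 b2 a1 a2 n p2, vseq b1 b2 a2 n p2).
Proof.
  induction n. simpl. f_equal; ring.
  simpl Nat.iter. rewrite IHn. unfold hbar, h. simpl. f_equal. ring.
Qed.

Lemma inv_h b1 b2 a1 a2 (hb1 : 0 < b1) (hb2 : 0 < b2) (ha1 : 0 <= a1 < 1) (ha2 : 0 <= a2 < 1)
  n p1 p2 : 0 < p1 <= 1 -> 0 <= p2 <= 1 ->
  0 <= IX b1 b2 a1 a2 n p1 p2 <= 8 /\ 0 <= IY b1 b2 a1 a2 n p1 p2 <= 8.
Proof.
  intros H1 H2. induction n.
  - unfold IX, IY; simpl; lra.
  - rewrite IX_S, IY_S. split; apply g_bounds; auto.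
    apply f1_bounds; auto; lra. apply f2_bounds; auto; lra.
Qed.

Lemma vseq_bounds b1 b2 a2 (hb1 : 0 < b1) (hb2 : 0 < b2) (ha2 : 0 <= a2 < 1) n p2 :
  0 <= p2 <= 1 -> 0 <= vseq b1 b2 a2 n p2 <= 8.
Proof.
  intros H. induction n. simpl; lra.
  unfold vseq; simpl Nat.iter. fold (vseq b1 b2 a2 n p2). unfold Hv.
  apply g_bounds; auto. apply f2_bounds; auto; lra.
Qed.

Lemma Pn_bounds b1 b2 a1 a2 (hb1 : 0 < b1) (hb2 : 0 < b2) (ha1 : 0 <= a1 < 1) (ha2 : 0 <= a2 < 1) n p2 :
  0 <= p2 <= 1 -> (phi a1 b1 * exp (- (b2 * 8))) ^ n <= Pn b1 b2 a1 a2 n p2 <= (phi a1 b1) ^ n.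
Proof.
  intros H. assert (0 < phi a1 b1) by (unfold phi; nra).
  pose proof (exp_pos (- (b2 * 8))).
  induction n. simpl; lra.
  simpl Pn. pose proof (vseq_bounds b1 b2 a2 hb1 hb2 ha2 n p2 H).
  assert (0 <= b2 * vseq b1 b2 a2 n p2 <= b2 * 8) by nra.
  pose proof (psi_bounds _ _ H3). simpl pow.
  assert (0 < (phi a1 b1 * exp (- (b2 * 8))) ^ n) by (apply pow_lt; nra).
  split.
  - replace (phi a1 b1 * exp (- (b2 * 8)) * (phi a1 b1 * exp (- (b2 * 8))) ^ n) with
      (phi a1 b1 * ((phi a1 b1 * exp (- (b2 * 8))) ^ n) * exp (- (b2 * 8))) by ring.
    apply Rmult_le_compat; try lra. apply Rmult_le_pos; lra.
    apply Rmult_le_compat_l; lra.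
  - replace (phi a1 b1 * phi a1 b1 ^ n) with (phi a1 b1 * phi a1 b1 ^ n * 1) by ring.
    apply Rmult_le_compat; try lra. apply Rmult_le_pos; lra.
    apply Rmult_le_compat_l; lra.
Qed.

Lemma psi_unif K : uniform_continuity psi (fun x => 0 <= x <= K).
Proof. apply Heine. apply compact_P3. intros; apply psi_cont. Qed.

Lemma UL_cst_mult c F L : UL F L -> BD L -> UL (fun p1 p2 => c * F p1 p2) (fun p2 => c * L p2).
Proof. intros. apply (UL_mult (fun _ _ => c) F (fun _ => c) L); auto. apply UL_const. apply BD_const. Qed.

Lemma main_ind b1 b2 a1 a2 (hb1 : 0 < b1) (hb2 : 0 < b2) (ha1 : 0 <= a1 < 1) (ha2 : 0 <= a2 < 1) n :
  UL (fun p1 p2 => IX b1 b2 a1 a2 n p1 p2 / p1) (Pn b1 b2 a1 a2 n) /\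
  UL (IY b1 b2 a1 a2 n) (vseq b1 b2 a2 n).
Proof.
  induction n.
  - split.
    + apply UL_ext with (fun _ _ => 1) (fun _ => 1). apply UL_const.
      apply EV_all. intros. unfold IX. simpl. field. lra. reflexivity.
    + apply UL_ext with (fun _ p2 => p2) (fun p2 => p2). apply (UL_const (fun p2 => p2)).
      apply EV_all. intros. reflexivity. reflexivity.
  - destruct IHn as [IH1 IH2].
    set (X := IX b1 b2 a1 a2 n). set (Y := IY b1 b2 a1 a2 n).
    set (P := Pn b1 b2 a1 a2 n). set (v := vseq b1 b2 a2 n).
    assert (BP : BD P).
    { exists (phi a1 b1 ^ n). intros p2 Hp. pose proof (Pn_bounds b1 b2 a1 a2 hb1 hb2 ha1 ha2 n p2 Hp).
      assert (0 <= (phi a1 b1 * exp (- (b2 * 8))) ^ n) by (apply pow_le, Rmult_le_pos; [unfold phi; apply Rmult_le_pos; lra | left; apply exp_pos]).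
      fold P in H. rewrite Rabs_right; lra. }
    assert (Bv : BD v).
    { exists 8. intros p2 Hp. pose proof (vseq_bounds b1 b2 a2 hb1 hb2 ha2 n p2 Hp). fold v in H.
      rewrite Rabs_right; lra. }
    assert (EI : EV (fun p1 p2 => 0 <= X p1 p2 <= 8 /\ 0 <= Y p1 p2 <= 8)).
    { eapply EV_mono. apply (EV_p1 1). lra. intros. apply inv_h; auto; lra. }
    assert (HX : UL X (fun _ => 0)).
    { apply UL_ext with (fun p1 p2 => p1 * (X p1 p2 / p1)) (fun p2 => 0 * P p2).
      apply UL_mult; auto. apply UL_p1. apply BD_const.
      apply EV_all. intros. field. lra. intros; ring. }
    set (Sf := fun p1 p2 => b1 * X p1 p2 + b2 * Y p1 p2).
    assert (HS : UL Sf (fun p2 => b2 * v p2)).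
    { apply UL_ext with (fun p1 p2 => b1 * X p1 p2 + b2 * Y p1 p2) (fun p2 => b1 * 0 + b2 * v p2).
      apply UL_plus; apply UL_cst_mult; auto. apply BD_const.
      apply EV_all; reflexivity. intros; ring. }
    set (K := 8 * (b1 + b2)).
    assert (HpS : UL (fun p1 p2 => psi (Sf p1 p2)) (fun p2 => psi (b2 * v p2))).
    { apply UL_comp with (X := fun x => 0 <= x <= K). apply psi_unif.
      eapply EV_mono. apply EI. intros p1 p2 _ _ [[] []]. unfold Sf, K. split; nra.
      intros p2 Hp. pose proof (vseq_bounds b1 b2 a2 hb1 hb2 ha2 n p2 Hp). fold v in H. unfold K. split; nra.
      exact HS. }
    assert (BpS : BD (fun p2 => psi (b2 * v p2))).
    { exists 1. intros p2 Hp. pose proof (vseq_bounds b1 b2 a2 hb1 hb2 ha2 n p2 Hp). fold v in H.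
      assert (0 <= b2 * v p2 <= b2 * 8) by nra. pose proof (psi_bounds _ _ H0).
      pose proof (exp_pos (- (b2 * 8))). rewrite Rabs_right; lra. }
    split.
    +
      set (F := fun p1 p2 => (1 - a1) * (psi (Sf p1 p2) * b1 * (X p1 p2 / p1))).
      assert (HF : UL F (fun p2 => (1 - a1) * (psi (b2 * v p2) * b1 * P p2))).
      { apply UL_cst_mult. apply UL_mult; auto. apply UL_mult; auto. apply UL_const. apply BD_const.
        destruct BpS as [M1 HM1]. exists (M1 * Rabs b1). intros. rewrite Rabs_mult.
        apply Rmult_le_compat_r. apply Rabs_pos. auto.
        destruct BpS as [M1 HM1]. destruct BP as [M2 HM2]. exists (M1 * Rabs b1 * M2). intros.
        rewrite !Rabs_mult. pose proof (Rabs_pos b1). pose proof (Rabs_pos (P p2)).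
        pose proof (Rabs_pos (psi (b2 * v p2))). specialize (HM1 p2 H). specialize (HM2 p2 H).
        apply Rmult_le_compat; try apply Rmult_le_pos; auto. apply Rmult_le_compat_r; auto. }
      apply UL_ext with (fun p1 p2 => IX b1 b2 a1 a2 (S n) p1 p2 / p1)
        (fun p2 => (1 - a1) * (psi (b2 * v p2) * b1 * P p2)).
      2: apply EV_all; reflexivity.
      2: intros; simpl; fold P v; unfold phi; ring.
      apply UL_approx with F. exact HF.
      intros eps Heps.
      destruct (UL_bnd _ _ IH1 BP) as [M [HM EM]]. fold X in EM.
      set (e' := eps / (b1 * (M + 1))).
      assert (He' : 0 < e') by (unfold e'; apply Rdiv_lt_0_compat; nra).
      destruct (g_small a1 ha1 e' He') as [d [Hd Hg]].
      eapply EV_mono. apply EV_and. apply EV_and. apply EM. apply EI. apply (HX (d / b1)).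
      apply Rdiv_lt_0_compat; lra.
      intros p1 p2 Hp1 Hp2 [[A [[B1 B2] [C1 C2]]] D1].
      rewrite IX_S. fold X Y. rewrite f1_form by auto. fold (Sf p1 p2).
      rewrite Rminus_0_r, Rabs_right in D1 by lra.
      assert (HSf : 0 <= Sf p1 p2) by (unfold Sf; nra).
      pose proof (psi_bounds (Sf p1 p2) (Sf p1 p2) (conj HSf (Rle_refl _))) as Hps.
      pose proof (exp_pos (- Sf p1 p2)).
      set (T := psi (Sf p1 p2) * b1 * X p1 p2).
      assert (HT : 0 <= T < d).
      { unfold T. split. apply Rmult_le_pos; nra.
        apply Rle_lt_trans with (b1 * X p1 p2).
        assert (0 <= (1 - psi (Sf p1 p2)) * (b1 * X p1 p2)) by (apply Rmult_le_pos; nra). nra.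
        apply Rmult_lt_reg_l with (/ b1). apply Rinv_0_lt_compat; lra.
        rewrite <- Rmult_assoc, Rinv_l, Rmult_1_l by lra. unfold Rdiv in D1. lra. }
      specialize (Hg T HT).
      unfold F. replace ((1 - a1) * (psi (Sf p1 p2) * b1 * (X p1 p2 / p1))) with ((1 - a1) * T / p1)
        by (unfold T; field; lra).
      replace (g a1 T / p1 - (1 - a1) * T / p1) with ((g a1 T - (1 - a1) * T) / p1) by (field; lra).
      unfold Rdiv. rewrite Rabs_mult, (Rabs_right (/ p1)) by (left; apply Rinv_0_lt_compat; lra).
      assert (T / p1 <= b1 * M).
      { unfold T. replace (psi (Sf p1 p2) * b1 * X p1 p2 / p1) with (psi (Sf p1 p2) * b1 * (X p1 p2 / p1)) by (field; lra).
        assert (HQ : 0 <= X p1 p2 / p1) by (unfold Rdiv; apply Rmult_le_pos; [lra|left; apply Rinv_0_lt_compat; lra]).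
        rewrite Rabs_right in A by lra.
        assert (psi (Sf p1 p2) * (b1 * (X p1 p2 / p1)) <= 1 * (b1 * M)).
        { apply Rmult_le_compat; try lra. apply Rmult_le_pos; lra. apply Rmult_le_compat_l; lra. }
        lra. }
      assert (e' * (b1 * M) <= eps).
      { assert (E1 : e' * (b1 * (M + 1)) = eps) by (unfold e'; field; nra).
        assert (e' * (b1 * M) <= e' * (b1 * (M + 1))) by (apply Rmult_le_compat_l; nra). lra. }
      unfold Rdiv in H0.
      assert (0 < / p1) by (apply Rinv_0_lt_compat; lra).
      apply Rle_trans with (e' * T * / p1). apply Rmult_le_compat_r; lra.
      rewrite Rmult_assoc. apply Rle_trans with (e' * (b1 * M)); [|lra].
      apply Rmult_le_compat_l; lra.
    +
      assert (HY : UL (fun p1 p2 => psi (Sf p1 p2) * b2 * Y p1 p2) (fun p2 => psi (b2 * v p2) * b2 * v p2)).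
      { apply UL_mult; auto. apply UL_mult; auto. apply UL_const. apply BD_const.
        destruct BpS as [M1 HM1]. exists (M1 * Rabs b2). intros. rewrite Rabs_mult.
        apply Rmult_le_compat_r. apply Rabs_pos. auto. }
      apply UL_ext with (fun p1 p2 => g a2 (psi (Sf p1 p2) * b2 * Y p1 p2))
        (fun p2 => g a2 (psi (b2 * v p2) * b2 * v p2)).
      * apply UL_comp with (X := fun x => 0 <= x <= 1). apply g_unif; auto.
        eapply EV_mono. apply EI. intros p1 p2 _ _ [[] []]. unfold Sf. rewrite <- f2_form by auto.
        apply f2_bounds; auto.
        intros p2 Hp. pose proof (vseq_bounds b1 b2 a2 hb1 hb2 ha2 n p2 Hp). fold v in H.
        replace (b2 * v p2) with (b1 * 0 + b2 * v p2) by ring. rewrite <- f2_form by (auto; lra).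
        apply f2_bounds; auto; lra.
        exact HY.
      * eapply EV_mono. apply EI. intros p1 p2 _ _ [[] []]. rewrite IY_S. fold X Y.
        rewrite f2_form by auto. reflexivity.
      * intros p2 Hp. pose proof (vseq_bounds b1 b2 a2 hb1 hb2 ha2 n p2 Hp). fold v in H.
        change (vseq b1 b2 a2 (S n) p2) with (Hv b1 b2 a2 (v p2)). unfold Hv.
        rewrite f2_form by (auto; lra). rewrite Rmult_0_r, Rplus_0_l. reflexivity.
Qed.

Theorem mainTheorem17 (b1 b2 a1 a2 : R)
  (hb1 : 0 < b1) (hb2 : 0 < b2)
  (ha1 : 0 <= a1 < 1) (ha2 : 0 <= a2 < 1) (k : nat) :
  forall eps : R, 0 < eps ->
  exists delta : R, 0 < delta /\
    forall p1 p2 : R, 0 < p1 < delta -> 0 <= p2 <= 1 ->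
      Rabs (fst (Nat.iter k (hbar b1 b2 a1 a2) (p1, p2))
            / fst (Nat.iter k (h b1 b2 a1 a2) (p1, p2)) - 1) < eps.
Proof.
  intros eps Heps.
  destruct (main_ind b1 b2 a1 a2 hb1 hb2 ha1 ha2 k) as [H1 _].
  assert (Hm : 0 < (phi a1 b1 * exp (- (b2 * 8))) ^ k).
  { apply pow_lt, Rmult_lt_0_compat. unfold phi; nra. apply exp_pos. }
  pose proof (UL_inv _ _ _ H1 Hm (fun p2 Hp => proj1 (Pn_bounds b1 b2 a1 a2 hb1 hb2 ha1 ha2 k p2 Hp))) as Hi.
  destruct (Hi eps Heps) as [d [Hd E]]. exists d. split; auto.
  intros p1 p2 Hp1 Hp2. specialize (E p1 p2 Hp1 Hp2). simpl in E.
  rewrite hbar_iter. simpl fst. fold (IX b1 b2 a1 a2 k p1 p2).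
  replace (p1 * Pn b1 b2 a1 a2 k p2 / IX b1 b2 a1 a2 k p1 p2) with
    (Pn b1 b2 a1 a2 k p2 / (IX b1 b2 a1 a2 k p1 p2 / p1)); auto.
  unfold Rdiv. rewrite Rinv_mult, Rinv_inv. ring.
Qed.
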